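(* Suppose $E,F\subset\mathcal{T}$ are disjoint stopping times with $F\succ E$. Then: (1) There is a function $h$ on $\mathcal{T}$, admissible for $Cap_{\mathcal{T}}(E,F)$, with $Cap_{\mathcal{T}}(E,F)=\|h\|_{\ell^2}^2$. Put $H=Ih$. (2) $H$ is harmonic on $\mathcal{T}\setminus(E\cup F)$. (3) If $S$ is any stopping time in $\mathcal{T}$, then $\sum_{\kappa\in S}|h(\kappa)|\le2\,Cap_{\mathcal{T}}(E,F)$. (4) $h$ is positive on $\mathcal{G}(E,F)$ and zero elsewhere.
   Context: Tree. $\mathcal{T}$ is the rooted dyadic tree with root $o$ (vertices are the dyadic arcs of the unit circle, each vertex $x$ having two children $x_+,x_-$ and, if $x\ne o$, a parent $x^{-1}$). Write $y\le x$ if $x$ lies in the subtree rooted at $y$, and $y<x$ if moreover $y\ne x$. $[o,x]=\{y:y\le x\}$ and $S(x)=\{y:y\ge x\}$. A stopping time is a set of pairwise incomparable vertices. For stopping times $E,F$, write $F\succ E$ if every $x\in F$ has some $y\in E$ with $y<x$. $\mathcal{G}(E,F)$ is the union of all geodesics $[y,x]=\{z:y\le z\le x\}$ with $x\in F$ and $y\in E$, $y<x$. Capacity. For $f:\mathcal{T}\to\mathbb{R}$ put $If(x)=\sum_{y\in[o,x]}f(y)$. The condenser capacity is $Cap_{\mathcal{T}}(E,F)=\inf\{\|f\|^2_{\ell^2(\mathcal{T})}:If\ge1\text{ on }F,\ \operatorname{supp}f\subset\bigcup_{e\in E}S(e)\}$. Functions satisfying these two constraints are called admissible. Harmonicity.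 For $\Omega\subset\mathcal{T}$, a vertex $x$ is interior to $\Omega$ if $x,x^{-1},x_+,x_-\in\Omega$. A function $H$ is harmonic in $\Omega$ if $H(x)=\frac13[H(x^{-1})+H(x_+)+H(x_-)]$ for every interior point $x$ of $\Omega$. *)

(* Defs.v *)
From HB Require Import structures.
From mathcomp Require Import all_boot all_order all_algebra.
From mathcomp Require Import all_classical all_reals.
From mathcomp Require Import ereal esum.
Set Implicit Arguments. Unset Strict Implicit. Unset Printing Implicit Defensive.
Import Order.TTheory GRing.Theory Num.Theory.
Local Open Scope classical_set_scope.
Local Open Scope ring_scope.

(* The rooted dyadic tree: a vertex is the sequence of left/right choices
   from the root, MOST RECENT CHOICE FIRST. *)
Definition vtx := seq bool.
Definition root : vtx := [::].
Definition child_p (x : vtx) : vtx := true :: x.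
Definition child_m (x : vtx) : vtx := false :: x.
Definition parent (x : vtx) : vtx := behead x.

(* y <= x : x lies in the subtree rooted at y (y is an ancestor-or-self of x) *)
Definition tle (y x : vtx) : bool := suffix y x.
Definition tlt (y x : vtx) : bool := tle y x && (y != x).

Definition stopping_time (S : set vtx) : Prop :=
  forall x y, S x -> S y -> x != y -> ~~ tle x y /\ ~~ tle y x.

Definition succ_st (F E : set vtx) : Prop :=
  forall x, F x -> exists y, E y /\ tlt y x.

Definition geod_union (E F : set vtx) : set vtx :=
  [set z | exists x y, [/\ F x, E y, tlt y x, tle y z & tle z x]].

(* If(x) = sum over y in [o,x] of f y; the ancestors of x are the drop i x *)
Definition Iop {R : realType} (f : vtx -> R) (x : vtx) : R :=
  \sum_(i < (size x).+1) f (drop i x).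

Definition l2norm2 {R : realType} (f : vtx -> R) : \bar R :=
  \esum_(x in [set: vtx]) ((f x ^+ 2)%:E).

Definition admissible {R : realType} (E F : set vtx) (f : vtx -> R) : Prop :=
  (forall x, F x -> 1 <= Iop f x) /\
  (forall x, f x != 0 -> exists e, E e /\ tle e x).

Definition Cap {R : realType} (E F : set vtx) : \bar R :=
  ereal_inf [set l2norm2 f | f in [set f : vtx -> R | admissible E F f]].

Definition interior_pt (Om : set vtx) (x : vtx) : Prop :=
  x != root /\ Om x /\ Om (parent x) /\ Om (child_p x) /\ Om (child_m x).

Definition harmonic_in {R : realType} (Om : set vtx) (H : vtx -> R) : Prop :=
  forall x, interior_pt Om x ->
    H x = (H (parent x) + H (child_p x) + H (child_m x)) / 3.

(* Main.v *)
Require Import Defs.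
From HB Require Import structures.
From mathcomp Require Import all_boot all_order all_algebra.
From mathcomp Require Import all_classical all_reals.
From mathcomp Require Import ereal esum topology normedtype sequences.
From mathcomp Require Import ring lra.
Import Order.TTheory GRing.Theory Num.Theory.
Import numFieldNormedType.Exports.
Local Open Scope classical_set_scope.
Local Open Scope ring_scope.
Set Implicit Arguments. Unset Strict Implicit. Unset Printing Implicit Defensive.

Lemma tle_refl x : tle x x. Proof. exact: suffix_refl. Qed.
Lemma tle_trans x y z : tle x y -> tle y z -> tle x z.
Proof. exact: suffix_trans. Qed.
Lemma tle_drop i x : tle (drop i x) x. Proof. exact: suffix_drop. Qed.
Lemma tle_size x y : tle x y -> (size x <= size y)%N. Proof. exact: size_suffix. Qed.
Lemma tleE y x : tle y x -> y = drop (size x - size y) x.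
Proof. by rewrite /tle suffixE => /eqP ->. Qed.
Lemma tle_cons y b x : tle y (b :: x) = (y == b :: x) || tle y x.
Proof.
apply/idP/idP.
  move=> /suffixP[s e]; case: s e => [|c s] /= e; first by rewrite e eqxx.
  by case: e => _ ->; rewrite /tle suffix_suffix orbT.
case/orP => [/eqP ->|]; first exact: tle_refl.
by move=> H; apply: tle_trans H (suffix_cons _ _).
Qed.
Lemma tle_anti x y : tle x y -> tle y x -> x = y.
Proof.
move=> h1 h2; have e := tleE h1.
have : size x = size y by apply/eqP; rewrite eqn_leq !tle_size.
by move=> hs; rewrite e hs subnn drop0.
Qed.
Lemma tle_eq_size x y : tle x y -> size x = size y -> x = y.
Proof. by move=> h hs; rewrite (tleE h) hs subnn drop0. Qed.
Lemma tle_total a b z : tle a z -> tle b z -> tle a b || tle b a.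
Proof.
move=> /tleE ea /tleE eb.
set i := (size z - size a)%N in ea; set j := (size z - size b)%N in eb.
case: (leqP i j) => hij.
  apply/orP; right; rewrite eb ea -(subnK hij) -drop_drop; exact: tle_drop.
apply/orP; left; rewrite eb ea -(subnK (ltnW hij)) -drop_drop; exact: tle_drop.
Qed.
Lemma tle_cons_l b x z : tle (b :: x) z -> tle x z.
Proof. by move=> h; apply: tle_trans h; rewrite tle_cons tle_refl orbT. Qed.
Lemma tle_nil x : tle [::] x. Proof. exact: suffix0s. Qed.
Lemma tle_nilr x : tle x [::] -> x = [::].
Proof. by rewrite /tle suffixs0 => /eqP. Qed.

Section Iop.
Variable R : realType.
Implicit Types f g : vtx -> R.

Lemma Iop_cons f b x : Iop f (b :: x) = f (b :: x) + Iop f x.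
Proof. by rewrite /Iop big_ord_recl. Qed.
Lemma Iop_nil f : Iop f [::] = f [::].
Proof. by rewrite /Iop big_ord_recl big_ord0 addr0. Qed.
Lemma eq_Iop f g x : (forall y, tle y x -> f y = g y) -> Iop f x = Iop g x.
Proof. by move=> h; apply: eq_bigr => i _; apply: h; exact: tle_drop. Qed.
Lemma IopD f g x : Iop (fun y => f y + g y) x = Iop f x + Iop g x.
Proof. by rewrite /Iop big_split. Qed.
Lemma IopZ c f x : Iop (fun y => c * f y) x = c * Iop f x.
Proof. by rewrite /Iop mulr_sumr. Qed.
Lemma IopN f x : Iop (fun y => - f y) x = - Iop f x.
Proof. by rewrite /Iop sumrN. Qed.
Lemma Iop0 x : Iop (fun _ => 0 : R) x = 0.
Proof. by rewrite /Iop big1. Qed.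
Lemma Iop_le f g x : (forall y, f y <= g y) -> Iop f x <= Iop g x.
Proof. by move=> h; apply: ler_sum => i _. Qed.
Lemma Iop_mono f y x : (forall w, 0 <= f w) -> tle y x -> Iop f y <= Iop f x.
Proof.
move=> f0; elim: x => [|b x IH]; first by move=> /tle_nilr ->.
rewrite tle_cons => /orP[/eqP ->//|/IH h].
by rewrite Iop_cons; apply: (le_trans h); rewrite lerDr.
Qed.

Definition ind (v : vtx) (y : vtx) : R := if y == v then 1 else 0.
Lemma Iop_ind v z : Iop (ind v) z = if tle v z then 1 else 0.
Proof.
elim: z => [|b z IH].
  by rewrite Iop_nil /ind /tle suffixs0 eq_sym.
rewrite Iop_cons IH tle_cons /ind.
have [e|ne] := eqVneq v (b :: z).
  have : ~~ tle v z by apply/negP => /tle_size; rewrite e /= ltnn.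
  by move/negbTE => ->; rewrite addr0.
by rewrite add0r.
Qed.
End Iop.

Section Energy.
Variable R : realType.
Implicit Types f g : vtx -> R.
Local Notation N := (@l2norm2 R).

Lemma sqE_ge0 (a : R) : (0 <= (a ^+ 2)%:E)%E.
Proof. by rewrite lee_fin sqr_ge0. Qed.

Lemma N_ge0 f : (0 <= N f)%E.
Proof. by apply: esum_ge0 => x _; exact: sqE_ge0. Qed.

Lemma N_ge_seq f s : uniq s -> ((\sum_(x <- s) f x ^+ 2)%:E <= N f)%E.
Proof.
move=> us; rewrite /l2norm2 -sumEFin; apply: esum_ge.
exists [set` s]; first by split => //; exact: finite_seq.
by rewrite fsbig_seq.
Qed.

Lemma N_pt f x : ((f x ^+ 2)%:E <= N f)%E.
Proof. by have := N_ge_seq f (isT : uniq [:: x]); rewrite big_seq1. Qed.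

Lemma N_le_seq f c : (forall s, uniq s -> ((\sum_(x <- s) f x ^+ 2)%:E <= c)%E) ->
  (N f <= c)%E.
Proof.
move=> H; rewrite /l2norm2 /esum; apply: ge_ereal_sup => _ [X [finX _] <-].
by rewrite fsbig_finite // sumEFin; apply: H; exact: finmap.fset_uniq.
Qed.

Lemma N_le f g : (forall x, f x ^+ 2 <= g x ^+ 2) -> (N f <= N g)%E.
Proof. by move=> H; apply: le_esum => x _; rewrite lee_fin. Qed.

Lemma N_upd1 f g x : (forall y, y != x -> f y = g y) ->
  (N f + (g x ^+ 2)%:E = N g + (f x ^+ 2)%:E)%E.
Proof.
move=> H; rewrite /l2norm2 (esumID [set x]); last by move=> *; exact: sqE_ge0.
rewrite [in RHS](esumID [set x]); last by move=> *; exact: sqE_ge0.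
rewrite !setTI !esum_set1 ?sqE_ge0 //.
rewrite (@eq_esum _ _ _ (fun i => (f i ^+ 2)%:E) (fun i => (g i ^+ 2)%:E)); last first.
  by move=> i hi; rewrite H //; apply/eqP; exact: hi.
rewrite addeAC [RHS]addeAC; congr (_ + _)%E; exact: addeC.
Qed.

Lemma N_upd_seq s f g : uniq s -> (forall y, y \notin s -> f y = g y) ->
  (N f + (\sum_(x <- s) g x ^+ 2)%:E = N g + (\sum_(x <- s) f x ^+ 2)%:E)%E.
Proof.
elim: s f => [|a s IH] f /=.
  move=> _ H; rewrite !big_nil; congr (_ + _)%E; rewrite /l2norm2.
  by apply: eq_esum => i _; rewrite H.
move=> /andP[nas us] H.
pose m := fun y => if y == a then g a else f y.
have h1 := @N_upd1 f m a.
have h2 := IH m us.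
rewrite !big_cons.
have -> : \sum_(x <- s) f x ^+ 2 = \sum_(x <- s) m x ^+ 2.
  rewrite big_seq [RHS]big_seq; apply: eq_bigr => i his.
  by rewrite /m; case: eqP => // e; rewrite -e his in nas.
rewrite !EFinD.
have -> : (N f + ((g a ^+ 2)%:E + (\sum_(j <- s) g j ^+ 2)%:E) =
          (N f + (g a ^+ 2)%:E) + (\sum_(j <- s) g j ^+ 2)%:E)%E by rewrite addeA.
have ma : m a = g a by rewrite /m eqxx.
rewrite -ma h1; last first.
  by move=> y hy; rewrite /m (negbTE hy).
rewrite -addeA (addeC _ (\sum_(j <- s) g j ^+ 2)%:E) addeA h2; last first.
  move=> y hy; rewrite /m; case: eqP => [->//|ne].
  by apply: H; rewrite inE negb_or hy andbT; apply/eqP.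
by rewrite -!addeA; congr (_ + _)%E; rewrite addeC.
Qed.

Lemma N_scale (c : R) f : (N (fun x => (c * f x)%R) <= (c ^+ 2)%:E * N f)%E.
Proof.
apply: N_le_seq => s us.
have -> : \sum_(x <- s) (c * f x) ^+ 2 = c ^+ 2 * \sum_(x <- s) f x ^+ 2.
  by rewrite mulr_sumr; apply: eq_bigr => i _; rewrite exprMn.
by rewrite EFinM; apply: lee_wpmul2l; [exact: sqE_ge0| exact: N_ge_seq].
Qed.

Lemma N_para f g : (N (fun x => (f x + g x)%R) + N (fun x => (f x - g x)%R) =
   N f + N f + N g + N g)%E.
Proof.
rewrite /l2norm2 -!esumD; try by move=> *; rewrite ?adde_ge0 ?sqE_ge0.
apply: eq_esum => i _; rewrite -!EFinD; congr EFin; ring.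
Qed.

Lemma N_0 : N (fun _ => 0%R) = 0%E.
Proof. by rewrite /l2norm2; apply: esum1 => i _; rewrite expr0n. Qed.

Lemma N_0pt f x : N f = 0%E -> f x = 0.
Proof.
move=> h; have := N_pt f x; rewrite h lee_fin => H.
by apply/eqP; rewrite -sqrf_eq0 eq_le H sqr_ge0.
Qed.
End Energy.

Section Lim.
Variable R : realType.

Lemma cauchy_seq_cvg (u : nat -> R) (d : nat -> R) :
  (forall M n, (M <= n)%N -> `|u n - u M| <= d M) ->
  (forall e, 0 < e -> exists M, d M < e) -> cvgn u.
Proof.
move=> hu hd.
apply: cauchy_cvg; apply/cauchyP => e e0.
have [M hM] := hd e e0.
exists (u M); exists M => // n /= hn.
rewrite /ball /= distrC.
by apply: le_lt_trans (hu M n hn) hM.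
Qed.

Lemma lim_le_of (u : nat -> R) (l b : R) (M : nat) :
  u n @[n --> \oo] --> l -> (forall n, (M <= n)%N -> u n <= b) -> l <= b.
Proof.
move=> cu hb; rewrite -(cvg_lim _ cu) //.
by apply: limr_le; [apply/cvg_ex; exists l|exists M].
Qed.

Lemma lim_ge_of (u : nat -> R) (l b : R) (M : nat) :
  u n @[n --> \oo] --> l -> (forall n, (M <= n)%N -> b <= u n) -> b <= l.
Proof.
move=> cu hb; rewrite -(cvg_lim _ cu) //.
by apply: limr_ge; [apply/cvg_ex; exists l|exists M].
Qed.

Lemma cvg_bigsum (I : Type) (r : seq I) (P : pred I) (u : I -> nat -> R) (l : I -> R) :
  (forall i, u i n @[n --> \oo] --> l i) ->
  (\sum_(i <- r | P i) u i n) @[n --> \oo] --> \sum_(i <- r | P i) l i.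
Proof.
move=> H; elim: r => [|a r IH].
  rewrite big_nil; under eq_fun do rewrite big_nil; exact: cvg_cst.
rewrite big_cons; under eq_fun do rewrite big_cons.
case: (P a) => //; exact: cvgD.
Qed.

Lemma arch2 (e : R) : 0 < e -> exists M : nat, 2 / (M.+1)%:R < e.
Proof.
move=> e0; exists (Num.trunc (2 / e)).
have h : 2 / e < (Num.trunc (2 / e)).+1%:R.
  by rewrite -truncn_lt_nat // divr_ge0 // ltW.
rewrite ltr_pdivrMr // mulrC -ltr_pdivrMr //.
Qed.

Lemma sq_abs_le (d k : R) : d ^+ 2 <= k ^+ 2 -> 0 <= k -> `|d| <= k.
Proof.
move=> h k0; rewrite -ler_sqr ?nnegrE ?normr_ge0 //.
by rewrite real_normK // num_real.
Qed.
End Lim.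
Lemma sum_fin (R : realType) (a b : \bar R) r : (0 <= a)%E -> (0 <= b)%E -> (a + b = r%:E)%E ->
  exists p q, [/\ a = p%:E, b = q%:E & p + q = r].
Proof.
case: a => [p| |]; case: b => [q| |] //= _ _ [<-]; by exists p, q.
Qed.

Section Min.
Variable R : realType.
Variables (E F : set vtx).
Implicit Types f g h : vtx -> R.
Local Notation N := (@l2norm2 R).

Definition isMin h := [/\ admissible E F h, Cap E F = N h & (N h < +oo)%E].

Lemma Cap_le f : admissible E F f -> (Cap E F <= N f)%E.
Proof. by move=> af; apply: ereal_inf_lbound; exists f. Qed.

Lemma Cap_ge0 : (0 <= Cap E F :> \bar R)%E.
Proof. by apply/ereal_infP => _ [f _ <-]; exact: N_ge0. Qed.

Lemma finE (a : \bar R) b : (0 <= a)%E -> (a <= b%:E)%E -> exists r, a = r%:E.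
Proof. by case: a => // r; exists r. Qed.
Lemma finE2 (a : \bar R) : (0 <= a)%E -> (a < +oo)%E -> exists r, a = r%:E.
Proof. by case: a => // r; exists r. Qed.

Lemma adm_mid g h : admissible E F g -> admissible E F h ->
  admissible E F (fun x => 2^-1 * (g x + h x)).
Proof.
move=> [g1 g2] [h1 h2]; split.
  move=> z Fz; rewrite IopZ IopD.
  have := g1 z Fz; have := h1 z Fz; lra.
move=> x; have [->|gx] := eqVneq (g x) 0.
  by rewrite add0r mulf_eq0 negb_or => /andP[_ /h2].
by move=> _; exact: g2.
Qed.

Lemma min_unique h g : isMin h -> admissible E F g -> (N g <= N h)%E ->
  forall x, g x = h x.
Proof.
move=> [ha hC hf] ga gle x.
have [rh Eh] := finE2 (N_ge0 h) hf.
rewrite Eh in gle.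
have [rg Eg] := finE (N_ge0 g) gle.
rewrite Eg lee_fin in gle.
have Hp := N_para g h; rewrite Eg Eh -!EFinD in Hp.
have [p [q [Ep Eq pq]]] := sum_fin (N_ge0 _) (N_ge0 _) Hp.
have ua := adm_mid ga ha.
have c1 := Cap_le ua; rewrite hC Eh in c1.
have c2 := N_scale (2^-1) (fun x => g x + h x); rewrite Ep in c2.
have c3 := le_trans c1 c2; rewrite -EFinM lee_fin in c3.
have c4 := N_pt (fun x => g x - h x) x; rewrite Eq lee_fin /= in c4.
have q0 : q <= 0 by rewrite expr2 in c3; lra.
have : (g x - h x) ^+ 2 == 0 by rewrite eq_le sqr_ge0 (le_trans c4 q0).
by rewrite sqrf_eq0 subr_eq0 => /eqP.
Qed.
End Min.

Section Exist.
Variable R : realType.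
Variables (E F : set vtx).
Local Notation N := (@l2norm2 R).

Lemma exists_min : (Cap E F < +oo :> \bar R)%E -> exists h : vtx -> R, isMin E F h.
Proof.
move=> Cfin.
have [C EC] := finE2 (@Cap_ge0 R E F) Cfin.
pose e (n : nat) : R := ((n.+1)%:R ^+ 2)^-1.
have e0 n : 0 < e n by rewrite /e invr_gt0 exprn_gt0.
have hseq : forall n, exists f : vtx -> R, admissible E F f /\ (N f < (C + e n)%:E)%E.
  move=> n; have : (Cap E F < (C + e n)%:E)%E by rewrite EC lte_fin ltrDl.
  by move/ereal_inf_lt => [_ [f fa <-] lt]; exists f.
have [fs Hfs] := choice hseq.
have nfs n : exists r, N (fs n) = r%:E /\ C <= r /\ r < C + e n.
  have [fa lt] := Hfs n.
  have [r Er] := finE (N_ge0 (fs n)) (ltW lt).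
  exists r; split => //; split; last by rewrite Er lte_fin in lt.
  by have := Cap_le fa; rewrite EC Er lee_fin.
have bnd : forall m n x, (m <= n)%N -> `|fs n x - fs m x| <= 2 / (m.+1)%:R.
  move=> m n x mn.
  have [an _] := Hfs n; have [am _] := Hfs m.
  have [rn [Ern [Cn nn]]] := nfs n; have [rm [Erm [Cm mm]]] := nfs m.
  have Hp := N_para (fs n) (fs m); rewrite Ern Erm -!EFinD in Hp.
  have [p [q [Ep Eq pq]]] := sum_fin (N_ge0 _) (N_ge0 _) Hp.
  have ua := adm_mid an am.
  have c1 := Cap_le ua; rewrite EC in c1.
  have c2 := N_scale (2^-1) (fun x => fs n x + fs m x); rewrite Ep in c2.
  have c3 := le_trans c1 c2; rewrite -EFinM lee_fin in c3.
  have c4 := N_pt (fun y => fs n y - fs m y) x; rewrite Eq lee_fin /= in c4.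
  have enm : e n <= e m.
    rewrite /e lef_pV2 ?posrE ?exprn_gt0 // ler_sqr ?nnegrE // ler_nat.
    by rewrite ltnS.
  apply: sq_abs_le; last by rewrite divr_ge0.
  apply: (le_trans c4).
  have -> : (2 / (m.+1)%:R) ^+ 2 = 4 * e m.
    by rewrite /e expr_div_n; congr (_ / _); rewrite expr2 -natrM.
  rewrite expr2 in c3; lra.
have cv : forall x, cvgn (fun n => fs n x).
  move=> x; apply: (@cauchy_seq_cvg R _ (fun M => 2 / (M.+1)%:R)).
    by move=> M n; exact: bnd.
  exact: arch2.
pose h : vtx -> R := fun x => limn (fun n => fs n x).
have hcv : forall x, fs n x @[n --> \oo] --> h x.
  by move=> x; exact: cv.
have ha : admissible E F h.
  split.
    move=> z Fz; rewrite /Iop.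
    apply: (@lim_ge_of R (fun n => \sum_(i < (size z).+1) fs n (drop i z)) _ _ 0).
      by apply: cvg_bigsum => i; exact: hcv.
    by move=> n _; exact: (Hfs n).1.1 z Fz.
  move=> x hx; have [//|no] := pselect (exists e, E e /\ tle e x).
  have z0 n : fs n x = 0.
    have [//|ne] := eqVneq (fs n x) 0.
    by exfalso; apply: no; exact: (Hfs n).1.2 x ne.
  have : h x = 0.
    rewrite /h (_ : (fun n => fs n x) = fun=> 0) ?lim_cst //.
    by apply/funext => n; rewrite z0.
  by move/eqP; rewrite (negbTE hx).
have hN : (N h <= Cap E F)%E.
  rewrite EC; apply: N_le_seq => s us; rewrite lee_fin.
  have cs : (\sum_(i <- s) fs n i ^+ 2) @[n --> \oo] --> \sum_(i <- s) h i ^+ 2.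
    apply: cvg_bigsum => i; rewrite expr2; under eq_fun do rewrite expr2.
    exact: cvgM.
  rewrite leNgt; apply/negP => lt.
  have ltd : 0 < \sum_(i <- s) h i ^+ 2 - C by rewrite subr_gt0.
  have [M' hM'] := arch2 ltd.
  have eM : e M' <= 2 / (M'.+1)%:R.
    have k1 : 1 <= (M'.+1)%:R :> R by rewrite ler1n.
    have kp : 0 < (M'.+1)%:R :> R by rewrite ltr0n.
    have ki : 0 < (M'.+1)%:R^-1 :> R by rewrite invr_gt0.
    have ki1 : (M'.+1)%:R^-1 <= 1 :> R by rewrite invr_le1 ?unitf_gt0.
    rewrite /e -exprVn expr2; apply: (le_trans (ler_wpM2l (ltW ki) ki1)).
    by rewrite mulr1 -[X in X <= _]mul1r ler_wpM2r ?(ltW ki) // ler1n.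
  have := @lim_le_of R _ _ (C + e M') M' cs.
  have : (forall n, (M' <= n)%N -> \sum_(i <- s) fs n i ^+ 2 <= C + e M').
    move=> n hn; have [rn [Ern [_ nn]]] := nfs n.
    have := N_ge_seq (fs n) us; rewrite Ern lee_fin => h1.
    apply: (le_trans h1); apply: (le_trans (ltW nn)); rewrite lerD2l.
    rewrite /e lef_pV2 ?posrE ?exprn_gt0 // ler_sqr ?nnegrE // ler_nat.
    by rewrite ltnS.
  move=> H1 /(_ H1) H2; have H3 := le_lt_trans eM hM'.
  rewrite ltrBrDr in H3.
  by move: (lt_le_trans H3 H2); rewrite addrC ltxx.
exists h; split => //.
  by apply/le_anti; rewrite hN Cap_le.
by apply: (le_lt_trans hN).
Qed.
End Exist.

Lemma child_cases (R : realType) x z : z != x ->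
  (if tle (true :: x) z then 1 else 0) + (if tle (false :: x) z then 1 else 0)
  = (if tle x z then 1 else 0 : R).
Proof.
move=> zx.
have nb : ~~ (tle (true :: x) z && tle (false :: x) z).
  apply/negP => /andP[h1 h2]; have := tle_total h1 h2.
  by case/orP => /tle_eq_size /= /(_ erefl) [].
case hx: (tle x z); last first.
  have n1 : tle (true :: x) z = false by apply/negP => /tle_cons_l; rewrite hx.
  have n2 : tle (false :: x) z = false by apply/negP => /tle_cons_l; rewrite hx.
  by rewrite n1 n2 addr0.
move/suffixP: hx => [s es]; rewrite es in zx nb *.
case/lastP: s es zx nb => [|s b] es; first by rewrite eqxx.
rewrite cat_rcons => _.
case: b es => es /=.
  have -> : tle (true :: x) (s ++ true :: x) by exact: suffix_suffix.
  by rewrite andTb => /negbTE ->; rewrite addr0.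
have -> : tle (false :: x) (s ++ false :: x) by exact: suffix_suffix.
by rewrite andbT => /negbTE ->; rewrite add0r.
Qed.

Lemma min2 (R : realType) (a t : R) : 0 <= t ->
  0 <= Num.min (t + a) 1 - Num.min a 1 <= t.
Proof.
move=> t0; rewrite /Num.min /Order.min.
case: ifP => h1; case: ifP => h2; apply/andP; split.
all: try (move: h1 h2; rewrite ?ltNge => /negbFE h1 /negbFE h2).
all: lra.
Qed.

Section Props.
Variable R : realType.
Variables (E F : set vtx).
Implicit Types f g h : vtx -> R.
Local Notation N := (@l2norm2 R).

Lemma min_ge0 h : isMin E F h -> forall x, 0 <= h x.
Proof.
move=> hm x; have [[h1 h2] _ _] := hm.
have ga : admissible E F (fun y => `|h y|).
  split.
    move=> z Fz; apply: le_trans (h1 z Fz) _; apply: Iop_le => y; exact: ler_norm.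
  by move=> y; rewrite normr_eq0 => /h2.
have := @min_unique R E F h (fun y => `|h y|) hm ga.
have le : (N (fun y => `|h y|%R) <= N h)%E.
  by apply: N_le => y; rewrite real_normK // num_real.
by move=> /(_ le x) <-.
Qed.

Definition parI h (x : vtx) : R := if x is _ :: p then Iop h p else 0.

Lemma Iop_par h x : Iop h x = h x + parI h x.
Proof. by case: x => [|b p]; rewrite /parI ?Iop_nil ?addr0 ?Iop_cons. Qed.

Lemma min_le1 h : isMin E F h -> forall x, Iop h x <= 1.
Proof.
move=> hm; have h0 := min_ge0 hm; have [[h1 h2] _ _] := hm.
pose g (x : vtx) : R := Num.min (Iop h x) 1 - Num.min (parI h x) 1.
have m01 : Num.min (0 : R) 1 = 0 by rewrite /Num.min /Order.min ltr01.
have Ig x : Iop g x = Num.min (Iop h x) 1.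
  elim: x => [|b p IH]; first by rewrite Iop_nil /g /parI m01 subr0.
  by rewrite Iop_cons IH /g /parI subrK.
have gb x : 0 <= g x <= h x.
  by rewrite /g Iop_par; apply: min2.
have ga : admissible E F g.
  split.
    move=> z Fz; rewrite Ig; have := h1 z Fz.
    by rewrite /Num.min /Order.min; case: ifP => // /ltW.
  move=> y gy; apply: h2; apply: contraNN gy => /eqP hy.
  by have := gb y; rewrite hy => /andP[a b]; apply/eqP/le_anti; rewrite a b.
have le : (N g <= N h)%E.
  apply: N_le => y; have /andP[a b] := gb y.
  by rewrite !expr2; apply: ler_pM.
have eq := @min_unique R E F h g hm ga le.
move=> x; rewrite -(eq_Iop (fun y _ => eq y)) Ig.
by rewrite /Num.min /Order.min; case: ifP => // /ltW.
Qed.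

Lemma min_cons h : isMin E F h -> forall x, (exists e, E e /\ tle e x) -> ~ F x ->
  h x = h (true :: x) + h (false :: x).
Proof.
move=> hm x [e [Ee ex]] nFx; have [[h1 h2] hC hf] := hm.
pose D := h (true :: x) + h (false :: x) - h x.
pose s := - (D / 3).
pose g (y : vtx) : R := h y + s * ind R (true :: x) y + s * ind R (false :: x) y
   - s * ind R x y.
have ne1 : (true :: x) != x by apply/eqP => /(congr1 size) /= /eqP; rewrite -{2}(addn0 (size x)) -addn1 eqn_add2l.
have ne2 : (false :: x) != x by apply/eqP => /(congr1 size) /= /eqP; rewrite -{2}(addn0 (size x)) -addn1 eqn_add2l.
have ne3 : (true :: x) != (false :: x) by [].
have ga : admissible E F g.
  split.
    move=> z Fz; rewrite /g !IopD IopN !IopZ !Iop_ind.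
    have zx : z != x by apply/eqP => ezx; apply: nFx; rewrite -ezx.
    rewrite -(child_cases R zx) mulrDr.
    have -> : forall a b c : R, a + b + c - (b + c) = a by move=> a b c; ring.
    exact: h1.
  move=> y gy; have [hy|hy] := eqVneq (h y) 0; last exact: h2.
  have [->|n1] := eqVneq y x; first by exists e.
  have [->|n2] := eqVneq y (true :: x).
    by exists e; split => //; apply: tle_trans ex _; rewrite tle_cons tle_refl orbT.
  have [->|n3] := eqVneq y (false :: x).
    by exists e; split => //; apply: tle_trans ex _; rewrite tle_cons tle_refl orbT.
  by move: gy; rewrite /g /ind (negbTE n1) (negbTE n2) (negbTE n3) hy !mulr0 !addr0 subr0 eqxx.
have gx : g x = h x - s.
  by rewrite /g /ind eqxx !(eq_sym x) (negbTE ne1) (negbTE ne2) !mulr0 !addr0 mulr1.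
have gp : g (true :: x) = h (true :: x) + s.
  by rewrite /g /ind eqxx (negbTE ne1) (negbTE ne3) !mulr0 !addr0 mulr1 subr0.
have gm : g (false :: x) = h (false :: x) + s.
  by rewrite /g /ind eqxx (negbTE ne2) eq_sym (negbTE ne3) !mulr0 addr0 mulr1 subr0.
have us : uniq [:: x; true :: x; false :: x].
  by rewrite /= !inE !negb_or !(eq_sym x) ne1 ne2.
have up := @N_upd_seq R _ h g us.
have : (N h + (\sum_(y <- [:: x; true :: x; false :: x]) g y ^+ 2)%:E =
        N g + (\sum_(y <- [:: x; true :: x; false :: x]) h y ^+ 2)%:E)%E.
  apply: up => y; rewrite !inE !negb_or => /and3P[n1 n2 n3].
  by rewrite /g /ind (negbTE n1) (negbTE n2) (negbTE n3) !mulr0 !addr0 subr0.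
rewrite !big_cons !big_nil gx gp gm => Heq.
have le : (N g <= N h)%E.
  rewrite -(@leeD2rE _ ((h x ^+ 2 + (h (true :: x) ^+ 2 + (h (false :: x) ^+ 2 + 0)))%:E)) //.
  rewrite -Heq leeD2l // lee_fin.
  rewrite /s /D; set a := h x; set b := h (true :: x); set c := h (false :: x).
  have := sqr_ge0 (b + c - a); rewrite !expr2; nra.
have := @min_unique R E F h g hm ga le x; rewrite gx.
move/eqP; rewrite subr_eq addrC -subr_eq subrr eq_sym oppr_eq0 mulf_eq0 invr_eq0.
rewrite pnatr_eq0 orbF /D subr_eq0 => /eqP; lra.
Qed.
End Props.

Lemma real_aux (R : realType) (A C K : R) :
  (forall t, 0 < t -> 2 * (1 + t) * A <= (2 + t) * C + t * K) -> A <= C.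
Proof.
move=> H; rewrite leNgt; apply/negP => lt.
pose d := A - C; pose M := `|C + K - 2 * A| + 1.
have M0 : 0 < M by rewrite /M ltr_pwDr // normr_ge0.
have d0 : 0 < d by rewrite /d subr_gt0.
pose t := d / M.
have t0 : 0 < t by rewrite /t divr_gt0.
have := H t t0.
have h1 : t * (C + K - 2 * A) <= t * M.
  apply: ler_wpM2l; first exact: ltW.
  by rewrite /M; apply: le_trans (ler_norm _) _; rewrite lerDl.
have h2 : t * M = d by rewrite /t divfK // gt_eqF.
rewrite h2 /d in h1; lra.
Qed.

Section Props2.
Variable R : realType.
Variables (E F : set vtx).
Implicit Types f g h : vtx -> R.
Local Notation N := (@l2norm2 R).

Definition indS (s : seq vtx) (y : vtx) : R := if y \in s then 1 else 0.

Lemma Iop_indS (S : set vtx) s z : stopping_time S -> (forall y, y \in s -> S y) ->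
  Iop (indS s) z <= 1.
Proof.
move=> st sS; elim: z => [|b z IH].
  by rewrite Iop_nil /indS; case: ifP.
rewrite Iop_cons /indS; case: ifP => hin; last by rewrite add0r.
have -> : Iop (indS s) z = 0.
  rewrite -(Iop0 R z); apply: eq_Iop => y yz; rewrite /indS.
  case: ifP => // yin; exfalso.
  have ne : y != b :: z.
    by apply/eqP => e; have := tle_size yz; rewrite e /= ltnn.
  have [n1 _] := st _ _ (sS _ yin) (sS _ hin) ne.
  by move: n1; rewrite (tle_trans yz) // tle_cons tle_refl orbT.
by rewrite addr0.
Qed.

Lemma sum_quad (s : seq vtx) (f : vtx -> R) (a b c : R) :
  \sum_(y <- s) (a * f y ^+ 2 + b * f y + c) =
  a * \sum_(y <- s) f y ^+ 2 + b * \sum_(y <- s) f y + c * (size s)%:R.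
Proof.
elim: s => [|x s IH]; first by rewrite !big_nil /= !mulr0 !addr0.
by rewrite !big_cons IH /= -natr1; ring.
Qed.

Lemma min_flow_seq h (S : set vtx) s : isMin E F h -> stopping_time S -> uniq s ->
  (forall y, y \in s -> S y /\ exists e, E e /\ tle e y) ->
  ((\sum_(y <- s) h y)%:E <= N h)%E.
Proof.
move=> hm st us sS; have [[h1 h2] hC hf] := hm.
have h0 := min_ge0 hm.
have [C EC] := finE2 (N_ge0 h) hf.
rewrite EC lee_fin.
apply: (@real_aux R _ _ (size s)%:R) => t t0.
pose g (y : vtx) : R := (1 + t) * h y - t * indS s y.
have ga : admissible E F g.
  split.
    move=> z Fz; rewrite /g IopD IopN !IopZ.
    have := h1 z Fz; have := @Iop_indS S s z st (fun y hy => (sS y hy).1).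
    have : 0 <= Iop (indS s) z.
      by apply: sumr_ge0 => i _; rewrite /indS; case: ifP.
    nra.
  move=> y gy; have [hy|hy] := eqVneq (h y) 0; last exact: h2.
  case yin: (y \in s); first exact: (sS y yin).2.
  by move: gy; rewrite /g hy /indS yin !mulr0 subr0 eqxx.
have c1 := Cap_le ga; rewrite hC EC in c1.
have c2 := N_scale (1 + t) h; rewrite EC -EFinM in c2.
have up := @N_upd_seq R s (fun y => ((1 + t) * h y)%R) g us.
have : (N (fun y => ((1 + t) * h y)%R) + (\sum_(y <- s) g y ^+ 2)%:E =
        N g + (\sum_(y <- s) ((1 + t) * h y) ^+ 2)%:E)%E.
  by apply: up => y yn; rewrite /g /indS (negbTE yn) mulr0 subr0.
move=> Heq.
have [ng Eng] := finE (N_ge0 (fun y => ((1 + t) * h y)%R)) c2.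
rewrite Eng lee_fin in c2.
have bnd : (N g <= (ng + \sum_(y <- s) g y ^+ 2)%:E)%E.
  by rewrite EFinD -Eng Heq leeDl // lee_fin sumr_ge0 // => i _; exact: sqr_ge0.
have [rg Erg] := finE (N_ge0 g) bnd.
rewrite Eng Erg -!EFinD in Heq; case: Heq => Heq.
rewrite Erg lee_fin in c1.
have eg : \sum_(y <- s) g y ^+ 2 =
    \sum_(y <- s) ((1 + t) ^+ 2 * h y ^+ 2 + (- (2 * t * (1 + t))) * h y + t ^+ 2).
  rewrite big_seq [RHS]big_seq; apply: eq_bigr => y yin.
  by rewrite /g /indS yin mulr1; ring.
have eh : \sum_(y <- s) ((1 + t) * h y) ^+ 2 =
    \sum_(y <- s) ((1 + t) ^+ 2 * h y ^+ 2 + 0 * h y + 0).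
  by apply: eq_bigr => y _; ring.
rewrite eg eh !sum_quad in Heq.
set Q := \sum_(y <- s) h y ^+ 2 in Heq.
set A := \sum_(y <- s) h y in Heq *.
set K := (size s)%:R in Heq *.
have tp : 0 < t * (1 + t) by apply: mulr_gt0 => //; lra.
rewrite -subr_ge0.
have : 0 <= t * ((2 + t) * C + t * K - 2 * (1 + t) * A); last first.
  by rewrite pmulr_rge0.
nra.
Qed.
End Props2.

Section Props3.
Variable R : realType.
Variables (E F : set vtx).
Implicit Types f g h : vtx -> R.
Local Notation N := (@l2norm2 R).

Lemma min_flow h (S : set vtx) : isMin E F h -> stopping_time S ->
  (\esum_(k in S) (`|h k|)%:E <= N h)%E.
Proof.
move=> hm st; have h0 := min_ge0 hm; have [[h1 h2] _ _] := hm.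
apply: ge_ereal_sup => _ [X [finX XS] <-].
rewrite fsbig_finite // sumEFin.
set s := finmap.enum_fset (fset_set X).
have us : uniq s by exact: finmap.fset_uniq.
have sX : forall x, x \in s -> X x.
  by move=> x hx; rewrite -(fset_setK finX); exact: hx.
pose P := fun y => `[< exists e, E e /\ tle e y >].
rewrite (bigID P) /=.
have -> : \sum_(i <- s | ~~ P i) `|h i| = 0.
  apply: big1 => i hP; have [->|hi] := eqVneq (h i) 0; first by rewrite normr0.
  by move/negP: hP => hP; exfalso; apply: hP; apply/asboolP; exact: h2.
rewrite addr0 -big_filter.
have -> : \sum_(i <- [seq x <- s | P x]) `|h i| = \sum_(i <- [seq x <- s | P x]) h i.
  by apply: eq_bigr => i _; rewrite ger0_norm.
apply: (@min_flow_seq R E F h S) => //; first exact: filter_uniq.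
move=> y; rewrite mem_filter => /andP[/asboolP hP ys]; split => //.
exact: XS (sX y ys).
Qed.

Lemma min_offG h : E `&` F = set0 -> isMin E F h ->
  forall y, ~ geod_union E F y -> h y = 0.
Proof.
move=> disj hm y nG; have [[h1 h2] _ _] := hm.
have [[e [Ee ey]]|ne] := pselect (exists e, E e /\ tle e y); last first.
  by have [//|hy] := eqVneq (h y) 0; exfalso; apply: ne; exact: h2.
pose g (w : vtx) : R := if tle y w then 0 else h w.
have ga : admissible E F g.
  split.
    move=> z Fz; rewrite (@eq_Iop R g h); first exact: h1.
    move=> w wz; rewrite /g; case: ifP => // yw; exfalso; apply: nG.
    exists z, e; split => //; last exact: tle_trans yw wz.
    rewrite /tlt (tle_trans ey (tle_trans yw wz)) /=.
    apply/eqP => ez; have : (E `&` F) z by split => //; rewrite -ez.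
    by rewrite disj.
  by move=> w; rewrite /g; case: ifP; rewrite ?eqxx // => _ /h2.
have le : (N g <= N h)%E.
  by apply: N_le => w; rewrite /g; case: ifP => _ //; rewrite expr0n /= sqr_ge0.
have := @min_unique R E F h g hm ga le y.
by rewrite /g tle_refl.
Qed.
End Props3.

Section Props4.
Variable R : realType.
Variables (E F : set vtx).
Implicit Types f g h : vtx -> R.
Local Notation N := (@l2norm2 R).

Lemma min_pos h : stopping_time E -> stopping_time F -> E `&` F = set0 ->
  isMin E F h -> forall y, geod_union E F y -> 0 < h y.
Proof.
move=> stE stF disj hm y [z [e [Fz Ee /andP[ez nez] ey yz]]].
have h0 := min_ge0 hm; have le1 := min_le1 hm; have [[h1 h2] _ _] := hm.
have cons := min_cons hm; have offG := min_offG disj hm.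
have Iz : Iop h z = 1 by apply/le_anti; rewrite le1 h1.
have notF : forall w, tle w z -> w != z -> ~ F w.
  move=> w wz nwz Fw; have [n1 _] := stF _ _ Fw Fz nwz; by rewrite wz in n1.
rewrite lt_def h0 andbT; apply/negP => /eqP hy0.
have stepA : forall w, tle y w -> tle w z -> h w = 0 /\ Iop h w = Iop h y.
  elim => [|b w IH].
    by move=> /tle_nilr ey0 _; rewrite -ey0.
  rewrite tle_cons => /orP[/eqP <-|yw] bwz; first by [].
  have wz := tle_cons_l bwz.
  have [hw Iw] := IH yw wz.
  have nwz : w != z.
    by apply/eqP => e1; have := tle_size bwz; rewrite -e1 /= ltnn.
  have c := cons w (ex_intro _ e (conj Ee (tle_trans ey yw))) (notF w wz nwz).
  have ht := h0 (true :: w); have hf := h0 (false :: w).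
  have hbw : h (b :: w) = 0 by case: b bwz; lra.
  by split => //; rewrite Iop_cons hbw add0r.
have Iy : Iop h y = 1 by have [_ <-] := stepA z yz (tle_refl z).
have stepB : forall q, tle e q -> tle q z -> h q = 0 -> Iop h q = 1 -> False.
  elim => [|b p IH].
    move=> _ _ hq; rewrite Iop_nil hq => /eqP; by rewrite eq_sym oner_eq0.
  move=> eq qz hq Iq.
  have [ebp|nebp] := eqVneq e (b :: p).
    have Ip : Iop h p = 0.
      rewrite -(Iop0 R p); apply: eq_Iop => a ap.
      have [//|ha] := eqVneq (h a) 0; exfalso.
      have [e' [Ee' e'a]] := h2 a ha.
      have e'e : tle e' e by rewrite ebp; apply: tle_trans e'a _; apply: tle_trans ap _; rewrite tle_cons tle_refl orbT.
      have ne : e' != e.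
        apply/eqP => ee; have := tle_size (tle_trans e'a ap); rewrite ee ebp /= ltnn //.
      by have [n1 _] := stE _ _ Ee' Ee ne; rewrite e'e in n1.
    by move: Iq; rewrite Iop_cons Ip hq addr0 => /eqP; rewrite eq_sym oner_eq0.
  have ep : tle e p by move: eq; rewrite tle_cons (negbTE nebp).
  have pz := tle_cons_l qz.
  have npz : p != z by apply/eqP => e1; have := tle_size qz; rewrite -e1 /= ltnn.
  have c := cons p (ex_intro _ e (conj Ee ep)) (notF p pz npz).
  have Ip : Iop h p = 1 by move: Iq; rewrite Iop_cons hq add0r.
  have hs : h ((~~ b) :: p) = 0.
    have [//|hs] := eqVneq (h ((~~ b) :: p)) 0; exfalso.
    have G : geod_union E F ((~~ b) :: p).
      by apply: contrapT => nG; move: hs; rewrite offG // eqxx.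
    case: G => z' [e' [Fz' Ee' _ _ sz']].
    have m := Iop_mono h0 sz'; rewrite Iop_cons Ip in m.
    have := le1 z'; have := h0 ((~~ b) :: p).
    rewrite le_eqVlt eq_sym (negbTE hs) /= => hp; lra.
  apply: (IH ep pz) => //.
  have [b1 b2] : h (true :: p) = 0 /\ h (false :: p) = 0.
    by move: hq hs; case: (b) => /= -> ->.
  by rewrite c b1 b2 addr0.
exact: stepB y ey yz hy0 Iy.
Qed.
End Props4.

Lemma harm_of (R : realType) (h : vtx -> R) Om :
  (forall x, interior_pt Om x -> h x = h (child_p x) + h (child_m x)) ->
  harmonic_in Om (Iop h).
Proof.
move=> H x hx; have c := H x hx.
case: x hx c => [|b p] [nx _] c; first by rewrite eqxx in nx.
rewrite /parent /child_p /child_m /= !Iop_cons.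
rewrite /child_p /child_m in c; rewrite c; lra.
Qed.

Lemma harm_out (R : realType) (E F : set vtx) (h : vtx -> R) x :
  (forall y, ~ (exists e, E e /\ tle e y) -> h y = 0) ->
  interior_pt (~` (E `|` F)) x -> ~ (exists e, E e /\ tle e x) ->
  h x = h (child_p x) + h (child_m x).
Proof.
move=> H [_ [_ [_ [hp hm]]]] nx.
have ch : forall b, h (b :: x) = 0.
  move=> b; apply: H => -[e [Ee]]; rewrite tle_cons => /orP[/eqP ee|ex].
    by move: Ee; rewrite ee; case: (b) => Eb; [apply: hp|apply: hm]; left; exact: Eb.
  by apply: nx; exists e.
by rewrite /child_p /child_m !ch (H x nx) addr0.
Qed.

Lemma st_uniq (E : set vtx) e1 e2 x : stopping_time E -> E e1 -> E e2 ->
  tle e1 x -> tle e2 x -> e1 = e2.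
Proof.
move=> st E1 E2 h1 h2; apply/eqP; apply: contraT => ne.
have [n1 n2] := st _ _ E1 E2 ne.
by case/orP: (tle_total h1 h2) => hh; [rewrite hh in n1|rewrite hh in n2].
Qed.


Lemma N_ind (R : realType) e : l2norm2 (ind R e) = 1%E.
Proof.
have := @N_upd1 R (fun _ => 0) (ind R e) e.
rewrite N_0 /ind eqxx expr1n expr0n /= add0e adde0 => -> //.
by move=> y /negbTE ->.
Qed.

Lemma main_inf (R : realType) (E F : set vtx) :
  stopping_time E -> stopping_time F -> E `&` F = set0 -> succ_st F E ->
  Cap E F = +oo%E :> \bar R ->
  exists h : vtx -> R,
    [/\ admissible E F h /\ Cap E F = l2norm2 h,
        harmonic_in (~` (E `|` F)) (Iop h),
        (forall S : set vtx, stopping_time S ->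
           (\esum_(k in S) (`|h k|)%:E <= 2%:E * Cap E F)%E)
      & forall x, (geod_union E F x -> 0 < h x) /\
                  (~ geod_union E F x -> h x = 0)].
Proof.
move=> stE stF disj succ Cinf.
pose Fe e := F `&` [set z | tle e z].
have stEe : forall e, stopping_time [set e].
  by move=> e x y -> -> /eqP.
have stFe : forall e, stopping_time (Fe e).
  by move=> e x y [Fx _] [Fy _]; exact: stF.
have disjE : forall e, E e -> [set e] `&` Fe e = set0.
  move=> e Ee; apply/seteqP; split => // x [/= -> [Fe' _]].
  by have : (E `&` F) e by []; rewrite disj.
have compex : forall e, exists h : vtx -> R,
    (E e -> isMin [set e] (Fe e) h) /\ (~ E e -> h = fun _ => 0).
  move=> e; have [Ee|nEe] := pselect (E e); last by exists (fun _ => 0); split.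
  have ia : admissible [set e] (Fe e) (ind R e).
    split; first by move=> z [_ ez]; rewrite Iop_ind ez.
    move=> x; have [-> _|ne] := eqVneq x e.
      by exists e; split => //; exact: tle_refl.
    by rewrite /ind (negbTE ne) eqxx.
  have : (Cap [set e] (Fe e) < +oo :> \bar R)%E.
    by apply: le_lt_trans (Cap_le ia) _; rewrite N_ind ltry.
  by move/exists_min => [h hm]; exists h; split.
have [hf Hf] := choice compex.
have efex : forall x, exists e, (exists e', E e' /\ tle e' x) -> E e /\ tle e x.
  move=> x; have [[e' he']|ne] := pselect (exists e', E e' /\ tle e' x).
    by exists e'.
  by exists x.
have [ef Hef] := choice efex.
pose h : vtx -> R := fun x => hf (ef x) x.
have suppf : forall e x, E e -> hf e x != 0 -> tle e x.
  move=> e x Ee hx; have [[_ a2] _ _] := (Hf e).1 Ee.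
  by have [e' [ee' e'x]] := a2 x hx; rewrite -ee'.
have H1 : forall e x, E e -> tle e x -> h x = hf e x.
  move=> e x Ee ex; have [E' e'x] := Hef x (ex_intro _ e (conj Ee ex)).
  by rewrite /h (st_uniq stE E' Ee e'x ex).
have H0 : forall x, ~ (exists e, E e /\ tle e x) -> h x = 0.
  move=> x nx; rewrite /h; have [Ee0|nE0] := pselect (E (ef x)).
    have [//|hx] := eqVneq (hf (ef x) x) 0.
    by exfalso; apply: nx; exists (ef x); split => //; exact: suppf.
  by rewrite ((Hf (ef x)).2 nE0).
have ha : admissible E F h.
  split.
    move=> z Fz; have [e [Ee /andP[ez _]]] := succ z Fz.
    rewrite (@eq_Iop R h (hf e)).
      by have [[a1 _] _ _] := (Hf e).1 Ee; apply: a1; split.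
    move=> w wz; have [[e' [Ee' e'w]]|nw] := pselect (exists e', E e' /\ tle e' w).
      have ee : e' = e := st_uniq stE Ee' Ee (tle_trans e'w wz) ez.
      by rewrite (H1 e' w) // ee.
    rewrite H0 //; have [//|hw] := eqVneq (hf e w) 0.
    by exfalso; apply: nw; exists e; split => //; exact: suppf.
  move=> x hx; have [//|nx] := pselect (exists e, E e /\ tle e x).
  by move: hx; rewrite H0 // eqxx.
exists h; split.
- split => //; rewrite Cinf; apply/esym/eqP; rewrite -leye_eq -Cinf; exact: Cap_le.
- apply: harm_of => x hx.
  have [[e [Ee ex]]|nex] := pselect (exists e, E e /\ tle e x).
    have exc : forall b, tle e (b :: x).
      by move=> b; apply: tle_trans ex _; rewrite tle_cons tle_refl orbT.
    rewrite /child_p /child_m !(H1 e) //.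
    apply: (min_cons ((Hf e).1 Ee)); first by exists e.
    by move=> [Fx _]; case: hx => _ [hx _]; apply: hx; right.
  exact: (@harm_out R E F h x).
- by move=> S _; rewrite Cinf mulry gtr0_sg // mul1e leey.
- move=> x; split.
    move=> [z [e [Fz Ee /andP[ez nez] ex xz]]].
    rewrite (H1 e) //.
    apply: (min_pos (stEe e) (stFe e) (disjE e Ee) ((Hf e).1 Ee)).
    by exists z, e; split => //; rewrite /tlt ez.
  move=> nG; have [[e [Ee ex]]|nex] := pselect (exists e, E e /\ tle e x).
    rewrite (H1 e) //; apply: (min_offG (disjE e Ee) ((Hf e).1 Ee)).
    move=> [z [e' [[Fz _] /= -> ez ex' xz]]]; apply: nG.
    by exists z, e.
  exact: H0.
Qed.
Unset Implicit Arguments.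

Theorem mainTheorem6 (R : realType) (E F : set vtx) :
  stopping_time E -> stopping_time F -> E `&` F = set0 -> succ_st F E ->
  exists h : vtx -> R,
    [/\ admissible E F h /\ Cap E F = l2norm2 h,
        harmonic_in (~` (E `|` F)) (Iop h),
        (forall S : set vtx, stopping_time S ->
           (\esum_(k in S) (`|h k|)%:E <= 2%:E * Cap E F)%E)
      & forall x, (geod_union E F x -> 0 < h x) /\
                  (~ geod_union E F x -> h x = 0)].
Proof.
move=> stE stF disj succ.
have := leey (Cap E F : \bar R); rewrite le_eqVlt => /orP[/eqP Cinf|Cfin].
  exact: main_inf.
have [h hm] := exists_min Cfin.
have [[h1 h2] hC hf] := hm.
exists h; split.
- by [].
- apply: harm_of => x hx.
  have [ex|nex] := pselect (exists e, E e /\ tle e x).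
    apply: (min_cons hm) => // Fx.
    by case: hx => _ [hx _]; apply: hx; right.
  apply: (@harm_out R E F h x) => // y ny.
  by have [//|hy] := eqVneq (h y) 0; exfalso; apply: ny; exact: h2.
- move=> S st; apply: le_trans (min_flow hm st) _.
  have [C EC] := finE2 (N_ge0 h) hf.
  rewrite hC EC -EFinM lee_fin; have := N_ge0 h; rewrite EC lee_fin; lra.
- move=> x; split; first exact: min_pos.
  exact: min_offG.
Qed.
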